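(* Assume (A1)–(A8) and let $(x_i^k)$, $(y_i^k)$, $(\rho_i^k)$ ($i=1,\dots,n$) be generated by Algorithm PS. Then for each $i=1,\dots,n$: (a) $(\rho_i^k)_k$ is bounded; (b) $(x_i^k)_k$ is bounded; (c) there exist constants $\rho_{\min},\rho_{\max}$ (independent of $i$ and $k$) with $0<\rho_{\min}\le\rho_i^k\le\rho_{\max}<\infty$ for all $k\ge0$ and all $i$; (d) $(y_i^k)_k$ is bounded.
   Context: Standing setting. Let $\mathcal H_0,\dots,\mathcal H_{n-1}$ be real Hilbert spaces ($n\ge2$) and $\mathcal H_n:=\mathcal H_0$. Conventions: $0\cdot\infty=0$, $r\cdot\infty=\infty$ for $r>0$, $1/\infty=0$, $1/0=\infty$. For each $i=1,\dots,n$: (A1) $G_i:\mathcal H_0\to\mathcal H_i$ is bounded linear and $G_n=I$; (A2) $A_i:\mathcal H_i\rightrightarrows\mathcal H_i$ is maximal monotone; (A3) $B_i:\mathcal H_i\to\mathcal H_i$ is monotone and $\ell_i$-Lipschitz, $\ell_i\in[0,\infty)$; (A4) $C_i:\mathcal H_i\to\mathcal H_i$ is $\beta_i$-cocoercive with $\beta_i\in(0,\infty]$, i.e. $\langle x-y,C_ix-C_iy\rangle\ge\beta_i\|C_ix-C_iy\|^2$ for all $x,y$ (so $\beta_i=\infty$ means $C_i$ is constant, and then $1/(4\beta_i)=0$); (A5) $D_i:\mathcal H_i\to\mathcal H_i$ is monotone and continuously differentiable with $\|D_i'(x)-D_i'(y)\|\le m_i\|x-y\|$ for all $x,y$, $m_i\in[0,\infty)$;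 (A6) with $T_i:=A_i+B_i+C_i+D_i$, the inclusion $0\in\sum_{i=1}^nG_i^*T_i(G_iz)$ has at least one solution $z\in\mathcal H_0$; (A7) there is $\mathcal I_D\subset\{1,\dots,n\}$ with $m_i>0$ for $i\in\mathcal I_D$ and $m_i=0$, $D_i=0$ for $i\notin\mathcal I_D$. Notation: $D_{i,(u)}(x):=D_i(u)+D_i'(u)(x-u)$; for a maximal monotone $S$, $J_S:=(S+I)^{-1}$. $\boldsymbol{\mathcal H}:=\mathcal H_0\times\mathcal H_1\times\cdots\times\mathcal H_{n-1}$ with inner product $\langle p,\tilde p\rangle_\gamma:=\gamma\langle z,\tilde z\rangle+\sum_{i=1}^{n-1}\langle w_i,\tilde w_i\rangle$ for $p=(z,w_1,\dots,w_{n-1})$, $\tilde p=(\tilde z,\tilde w_1,\dots,\tilde w_{n-1})$, and norm $\|\cdot\|_\gamma$; for such $p$ one writes $w_n:=-\sum_{i=1}^{n-1}G_i^*w_i$. The extended solution set is $\mathcal S:=\{p\in\boldsymbol{\mathcal H}: w_i\in T_i(G_iz),\ i=1,\dots,n\}$ (with $w_n$ as just defined). Algorithm PS. Input: $(z^0,w_1^0,\dots,w_{n-1}^0)\in\boldsymbol{\mathcal H}$, $0<\underline\tau<\overline\tau<2$, $0<\underline\theta<\overline\theta<2$, $\hat\rho>0$, $\hat\delta>0$, $\gamma>0$; $w_n^0:=-\sum_{i=1}^{n-1}G_i^*w_i^0$. For $k=0,1,2,\dots$: for each $i=1,\dots,n$ define $(\rho_i^k,x_i^k,y_i^k)$ as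 follows. (i) If $w_i^k\in T_i(G_iz^k)$: $\rho_i^k=\hat\rho$, $x_i^k=G_iz^k$, $y_i^k=w_i^k$. (ii) Otherwise, if $i\in\mathcal I_D$: $\rho_i^k>0$ and $x_i^k=J_{\rho_i^k(A_i+D_{i,(G_iz^k)})}\big(G_iz^k+\rho_i^kw_i^k-\rho_i^k(B_i+C_i)(G_iz^k)\big)$ satisfy $\underline\theta\le4\ell_i^2(\rho_i^k)^2+(\beta_i^{-1}+\hat\delta)\rho_i^k+(m_i\rho_i^k\|x_i^k-G_iz^k\|)^2\le\overline\theta$, and $y_i^k=\frac{G_iz^k-x_i^k}{\rho_i^k}+w_i^k+[B_i(x_i^k)-B_i(G_iz^k)]+[D_i(x_i^k)-D_{i,(G_iz^k)}(x_i^k)]$. (iii) Otherwise ($i\notin\mathcal I_D$): some $\rho_i^k>0$ is chosen, $x_i^k=J_{\rho_i^kA_i}\big(G_iz^k+\rho_i^kw_i^k-\rho_i^k(B_i+C_i)(G_iz^k)\big)$ and $y_i^k=\frac{G_iz^k-x_i^k}{\rho_i^k}+w_i^k+[B_i(x_i^k)-B_i(G_iz^k)]$. Then set $u_i^k=x_i^k-G_ix_n^k$ ($i=1,\dots,n-1$), $v^k=\sum_{i=1}^nG_i^*y_i^k$, $\varphi_k=\langle z^k,v^k\rangle+\sum_{i=1}^{n-1}\langle w_i^k,u_i^k\rangle-\sum_{i=1}^n\big[\langle x_i^k,y_i^k\rangle+\frac1{4\beta_i}\|x_i^k-G_iz^k\|^2\big]$, $\pi_k=\gamma^{-1}\|v^k\|^2+\sum_{i=1}^{n-1}\|u_i^k\|^2$.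 If $\varphi_k>0$: choose $\tau_k\in[\underline\tau,\overline\tau]$, $\alpha_k=\tau_k\varphi_k/\pi_k$, $z^{k+1}=z^k-\gamma^{-1}\alpha_kv^k$, $w_i^{k+1}=w_i^k-\alpha_ku_i^k$ ($i=1,\dots,n-1$); otherwise $z^{k+1}=z^k$, $w_i^{k+1}=w_i^k$. Finally $w_n^{k+1}=-\sum_{i=1}^{n-1}G_i^*w_i^{k+1}$. (A8): for each $i\in\{1,\dots,n\}\setminus\mathcal I_D$ there are constants $\underline\rho_i,\overline\rho_i$ with $0<\underline\rho_i\le\rho_i^k\le\overline\rho_i<1/\big(\frac1{4\beta_i}+\ell_i\big)$ for all $k\ge0$ whenever $\rho_i^k$ is chosen in case (iii). *)

(* Defs.v *)
From HB Require Import structures.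
From mathcomp Require Import all_boot all_order all_algebra.
From mathcomp Require Import all_classical all_reals.
From mathcomp Require Import topology normedtype derive.
Set Implicit Arguments. Unset Strict Implicit. Unset Printing Implicit Defensive.
Import Order.TTheory GRing.Theory Num.Theory.
Import numFieldNormedType.Exports.
Local Open Scope ring_scope.
Local Open Scope classical_set_scope.

HB.mixin Record CompleteNormedModule_isHilbert (R : realType) V
    of CompleteNormedModule R V := {
  inner : V -> V -> R;
  innerC : forall x y, inner x y = inner y x;
  innerDl : forall x y z, inner (x + y) z = inner x z + inner y z;
  innerZl : forall (a : R) x y, inner (a *: x) y = a * inner x y;
  inner_normE : forall x, inner x x = `|x| ^+ 2 }.

#[short(type="hilbertType")]
HB.structure Definition Hilbert (R : realType) :=
  {V of CompleteNormedModule_isHilbert R V & CompleteNormedModule R V}.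

Section Ops.
Variable R : realType.

(* 1/beta with the convention 1/oo = 0 (beta is in (0, oo]) *)
Definition einv (b : \bar R) : R :=
  match b with EFin r => r^-1 | _ => 0 end.

Section OnSpace.
Variable X : hilbertType R.

Definition bounded_linear (Y : hilbertType R) (G : X -> Y) : Prop :=
  (forall (a : R) (x y : X), G (a *: x + y) = a *: G x + G y) /\
  exists M : R, forall x, `|G x| <= M * `|x|.

Definition is_adjoint (Y : hilbertType R) (G : X -> Y) (Gs : Y -> X) : Prop :=
  forall x y, inner (G x) y = inner x (Gs y).

(* set-valued operators X ==> X are represented as X -> set X *)
Definition monotone_op (A : X -> set X) : Prop :=
  forall x y u v, A x u -> A y v -> 0 <= inner (x - y) (u - v).

Definition maximal_monotone (A : X -> set X) : Prop :=
  monotone_op A /\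
  forall x u, (forall y v, A y v -> 0 <= inner (x - y) (u - v)) -> A x u.

Definition monotone_fun (B : X -> X) : Prop :=
  forall x y, 0 <= inner (x - y) (B x - B y).

Definition lipschitz_with (B : X -> X) (l : R) : Prop :=
  forall x y, `|B x - B y| <= l * `|x - y|.

Definition cocoercive (C : X -> X) (beta : \bar R) : Prop :=
  match beta with
  | EFin b => forall x y, b * `|C x - C y| ^+ 2 <= inner (x - y) (C x - C y)
  | +oo%E => forall x y, C x = C y
  | -oo%E => False
  end.

(* D'(u) = 'd D u (Frechet differential); operator-norm Lipschitz bound
   ||D'(u) - D'(v)|| <= m ||u - v||, unfolded on vectors h *)
Definition diff_lipschitz (D : X -> X) (m : R) : Prop :=
  forall u v h, `|'d D u h - 'd D v h| <= m * `|u - v| * `|h|.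

Definition linz (D : X -> X) (u x : X) : X := D u + 'd D u (x - u).

Definition Top (A : X -> set X) (B C D : X -> X) : X -> set X :=
  fun x y => exists2 a, A x a & y = a + B x + C x + D x.

Definition add_fun (A : X -> set X) (F : X -> X) : X -> set X :=
  fun x y => exists2 a, A x a & y = a + F x.

Definition scale_op (rho : R) (S : X -> set X) : X -> set X :=
  fun x y => exists2 s, S x s & y = rho *: s.

(* J_S := (S + I)^{-1}: x \in J_S r  <->  r \in S x + x *)
Definition Jres (S : X -> set X) (r : X) : set X :=
  fun x => exists2 s, S x s & r = s + x.

Definition block_hyp (A : X -> set X) (B C D : X -> X) (l : R) (beta : \bar R)
    (m : R) : Prop :=
  [/\ maximal_monotone A,
      monotone_fun B /\ 0 <= l /\ lipschitz_with B l,
      (0 < beta)%E /\ cocoercive C beta &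
      [/\ monotone_fun D, (forall u, differentiable D u),
          0 <= m & diff_lipschitz D m]].

(* One block of one iteration of Algorithm PS: rules (i), (ii), (iii)
   defining (rho_i^k, x_i^k, y_i^k) from G_i z^k and w_i^k.
   inD = (i \in I_D). *)
Definition ps_block (A : X -> set X) (B C D : X -> X) (l : R) (beta : \bar R)
    (m : R) (inD : bool) (rhohat thlo thhi dhat : R)
    (Gz w : X) (rho : R) (x y : X) : Prop :=
  let r := Gz + rho *: w - rho *: (B Gz + C Gz) in
  [/\ Top A B C D Gz w -> [/\ rho = rhohat, x = Gz & y = w],
      ~ Top A B C D Gz w -> inD ->
        [/\ 0 < rho,
            Jres (scale_op rho (add_fun A (linz D Gz))) r x,
            thlo <= 4 * l ^+ 2 * rho ^+ 2 + (einv beta + dhat) * rho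
                    + (m * rho * `|x - Gz|) ^+ 2 <= thhi &
            y = rho^-1 *: (Gz - x) + w + (B x - B Gz) + (D x - linz D Gz x)] &
      ~ Top A B C D Gz w -> ~~ inD ->
        [/\ 0 < rho,
            Jres (scale_op rho A) r x &
            y = rho^-1 *: (Gz - x) + w + (B x - B Gz)]].

End OnSpace.

(* Block spaces: blocks i = 1..n are indexed by o : option 'I_(n-1),
   Some j <-> i = j+1 (space H_{j+1}), None <-> i = n (space H_n = H_0). *)
Definition Hblk (H0 : hilbertType R) (m : nat) (Hs : 'I_m -> hilbertType R)
  (o : option 'I_m) : hilbertType R :=
  match o with Some j => Hs j | None => H0 end.

End Ops.

(* Main.v *)
Require Import Defs.
From HB Require Import structures.
From mathcomp Require Import all_boot all_order all_algebra.
From mathcomp Require Import all_classical all_reals.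
From mathcomp Require Import topology normedtype derive.
From mathcomp Require Import ring lra.
Import Order.TTheory GRing.Theory Num.Theory.
Import numFieldNormedType.Exports.
Local Open Scope ring_scope.
Local Open Scope classical_set_scope.

Lemma big_opt (V : zmodType) k (F : option 'I_k -> V) :
  \sum_(o : option 'I_k) F o = F None + \sum_(j < k) F (Some j).
Proof.
rewrite (bigD1 None) //=; congr (_ + _).
rewrite (reindex_omap Some (fun o => o)) //=; last by case.
by apply: eq_bigl => j; rewrite eqxx.
Qed.

Section Hil.
Context {R : realType} {X : hilbertType R}.
Implicit Types x y z : X.

Lemma innerDr x y z : inner x (y + z) = inner x y + inner x z.
Proof. by rewrite innerC innerDl !(innerC x). Qed.
Lemma innerZr (a : R) x y : inner x (a *: y) = a * inner x y.
Proof. by rewrite innerC innerZl innerC. Qed.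
Lemma inner0l y : inner 0 y = 0.
Proof. by rewrite -(scale0r (0:X)) innerZl mul0r. Qed.
Lemma inner0r y : inner y 0 = 0.
Proof. by rewrite innerC inner0l. Qed.
Lemma innerNl x y : inner (- x) y = - inner x y.
Proof. by rewrite -scaleN1r innerZl mulN1r. Qed.
Lemma innerNr x y : inner x (- y) = - inner x y.
Proof. by rewrite innerC innerNl innerC. Qed.
Lemma innerBl x y z : inner (x - y) z = inner x z - inner y z.
Proof. by rewrite innerDl innerNl. Qed.
Lemma innerBr x y z : inner x (y - z) = inner x y - inner x z.
Proof. by rewrite innerDr innerNr. Qed.

Lemma normD2 x y : `|x + y| ^+ 2 = `|x| ^+ 2 + 2 * inner x y + `|y| ^+ 2.
Proof.
rewrite -!inner_normE innerDl !innerDr (innerC y x); ring.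
Qed.
Lemma normB2 x y : `|x - y| ^+ 2 = `|x| ^+ 2 - 2 * inner x y + `|y| ^+ 2.
Proof. by rewrite normD2 innerNr normrN; ring. Qed.

Lemma CS x y : `|inner x y| <= `|x| * `|y|.
Proof.
have [->|y0] := eqVneq y 0; first by rewrite inner0r !normr0 mulr0.
have ny : 0 < `|y| ^+ 2 by rewrite exprn_gt0 // normr_gt0.
set t := inner x y / `|y| ^+ 2.
have h := normr_ge0 (x - t *: y).
have h2 : 0 <= `|x - t *: y| ^+ 2 by rewrite exprn_ge0.
rewrite normB2 innerZr normrZ exprMn real_normK ?num_real // in h2.
have e : t ^+ 2 * `|y| ^+ 2 = t * inner x y.
  rewrite /t; field; move: ny; rewrite exprn_gt0 // ?normr_gt0 //; by rewrite normr_eq0.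
rewrite e in h2.
have h3 : inner x y ^+ 2 <= (`|x| * `|y|) ^+ 2.
  have : t * inner x y * `|y| ^+ 2 = inner x y ^+ 2.
    rewrite /t; field; move: ny; rewrite exprn_gt0 // ?normr_gt0 //; by rewrite normr_eq0.
  move=> ee; rewrite exprMn -ee; nra.
have hp : 0 <= `|x| * `|y| by rewrite mulr_ge0.
rewrite -(ger0_norm hp) -ler_sqr ?normr_ge0 //. rewrite !real_normK ?num_real //. all: by rewrite nnegrE normr_ge0.
Qed.

Lemma inner_le x y : inner x y <= `|x| * `|y|.
Proof. exact: le_trans (ler_norm _) (CS x y). Qed.
Lemma inner_ge x y : - (`|x| * `|y|) <= inner x y.
Proof. by rewrite lerNl -innerNr; apply: le_trans (inner_le _ _) _; rewrite normrN. Qed.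

Lemma inner_sumr (I : Type) (r : seq I) (P : pred I) (F : I -> X) x :
  inner x (\sum_(i <- r | P i) F i) = \sum_(i <- r | P i) inner x (F i).
Proof. by apply: (big_morph (inner x)); [exact: innerDr | exact: inner0r]. Qed.
Lemma inner_suml (I : Type) (r : seq I) (P : pred I) (F : I -> X) x :
  inner (\sum_(i <- r | P i) F i) x = \sum_(i <- r | P i) inner (F i) x.
Proof. by apply: (big_morph (inner ^~ x)); [move=> ??; exact: innerDl | exact: inner0l]. Qed.

End Hil.

Section Hil2.
Context {R : realType} {X : hilbertType R}.
Lemma inner_eq (y v : X) : (forall d, inner d y = inner d v) -> y = v.
Proof.
move=> h; apply/eqP; rewrite -subr_eq0 -normr_eq0 -sqrf_eq0 -inner_normE.
by rewrite innerBr h subrr.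
Qed.
End Hil2.


Section Tay.
Context {R : realType} {X : hilbertType R}.

Definition innerl (e : X) : X -> R := fun y => inner e y.
Lemma innerl_lin (e : X) : linear (innerl e).
Proof. by move=> a u v; rewrite /innerl innerDr innerZr. Qed.
HB.instance Definition _ (e : X) := GRing.isLinear.Build R X R *:%R (innerl e) (innerl_lin e).

Lemma innerl_cont (e : X) : continuous (innerl e).
Proof.
apply: bounded_linear_continuous; apply/linear_boundedP.
near=> r => x; change (`|inner e x| <= r * `|x|).
have H1 := CS e x. rewrite (le_trans H1) //. apply: ler_wpM2r => //.
Unshelve. all: by end_near. Qed.

Definition sclh (h : X) : R -> X := fun t => t *: h.
Lemma sclh_lin h : linear (sclh h).
Proof. by move=> a u v; rewrite /sclh scalerDl scalerA. Qed.
HB.instance Definition _ (h : X) := GRing.isLinear.Build R R X *:%R (sclh h) (sclh_lin h).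
Lemma sclh_cont h : continuous (sclh h).
Proof. move=> t; exact: scalel_continuous. Qed.

Variables (D : X -> X) (m : R).
Hypothesis Dd : forall u, differentiable D u.
Hypothesis Dl : diff_lipschitz D m.
Hypothesis m0 : 0 <= m.

Lemma taylor (u h : X) : `|D (u + h) - D u - 'd D u h| <= m * `|h| ^+ 2.
Proof.
set e := D (u + h) - D u - 'd D u h.
pose p : R -> X := sclh h + cst u.
have dp t : differentiable p t.
  apply: differentiableD; last exact: differentiable_cst.
  exact: (@linear_differentiable R R X (sclh h) _ (sclh_cont h)).
have dpv t : 'd p t = sclh h :> (R -> X).
  rewrite diffD; last exact: differentiable_cst.
    rewrite diff_cst (@diff_lin R R X (sclh h)); last exact: sclh_cont.
    by apply/funext => s; rewrite /= addr0.
  exact: (@linear_differentiable R R X (sclh h) _ (sclh_cont h)).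
pose f : R -> R := innerl e \o (D \o p).
have dlin y : differentiable (innerl e) y.
  exact: (@linear_differentiable R X R (innerl e) _ (innerl_cont e)).
have df s : differentiable f s.
  apply: differentiable_comp; last exact: dlin.
  exact: differentiable_comp.
have dfv (s : R) : is_derive s 1 f (inner e ('d D (p s) h)).
  apply: DeriveDef; first exact/diff_derivable.
  rewrite deriveE // diff_comp //; last exact: differentiable_comp.
  rewrite (@diff_lin R X R (innerl e)); last exact: innerl_cont.
  rewrite /= diff_comp // dpv /= /sclh scale1r //.
have [c c01 hc] := MVT (@ltr01 R) (fun s _ => dfv s)
  (continuous_subspaceT (fun s => differentiable_continuous (df s))).
have pE t : p t = t *: h + u by [].
have p1 : p 1 = u + h by rewrite pE scale1r addrC.
have p0 : p 0 = u by rewrite pE scale0r add0r.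
have hf : f 1 - f 0 = inner e (D (u + h) - D u).
  by rewrite /f /= /innerl p1 p0 innerBr.
rewrite subr0 mulr1 hf in hc.
have key : `|e| ^+ 2 <= `|e| * (m * `|h| ^+ 2).
  rewrite -inner_normE {2}/e innerBr hc -innerBr.
  apply: le_trans (inner_le _ _) _; apply: ler_wpM2l => //.
  apply: le_trans (Dl _ _ _) _.
  have -> : p c - u = c *: h by rewrite pE addrK.
  rewrite normrZ expr2 -mulrA ler_wpM2l // ler_wpM2r // -{2}(mul1r `|h|) ler_wpM2r //.
  by rewrite ger0_norm; move: c01; rewrite in_itv /= => /andP[/ltW ? /ltW ?].
have [e0|e0] := eqVneq `|e| 0; first by rewrite e0 mulr_ge0 // exprn_ge0.
rewrite expr2 ler_pM2l // in key; by rewrite lt_def e0 normr_ge0.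
Qed.

Hypothesis Dmon : monotone_fun D.

Lemma dpsd (u h : X) : 0 <= inner h ('d D u h).
Proof.
set Xv := inner h ('d D u h).
have key t : 0 < t -> - (m * `|h| ^+ 3) * t <= Xv.
  move=> t0.
  have hm := Dmon (u + t *: h) u.
  rewrite addrAC subrr add0r innerZl in hm.
  set e := D (u + t *: h) - D u - 'd D u (t *: h).
  have de : D (u + t *: h) - D u = t *: 'd D u h + e.
    have lz : 'd D u (t *: h) = t *: 'd D u h by rewrite linearZ.
    by rewrite /e lz [RHS]addrC subrK.
  rewrite de innerDr innerZr in hm.
  have te := taylor u (t *: h).
  rewrite pmulr_rge0 // in hm.
  have ie : inner h e <= t * (t * (m * `|h| ^+ 3)).
    apply: le_trans (inner_le h e) _.
    apply: le_trans (ler_wpM2l (normr_ge0 h) te) _.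
    rewrite normrZ gtr0_norm // exprMn.
    suff -> : `|h| * (m * (t ^+ 2 * `|h| ^+ 2)) = t * (t * (m * `|h| ^+ 3)) by [].
    ring.
  have : 0 <= t * (Xv + t * (m * `|h| ^+ 3)).
    rewrite mulrDr; apply: le_trans hm _; rewrite -/Xv; lra.
  rewrite pmulr_rge0 // => h3.
  rewrite mulNr mulrC; lra.
have K0 : 0 <= m * `|h| ^+ 3 by rewrite mulr_ge0 // exprn_ge0.
rewrite leNgt; apply/negP => hX.
have t0 : 0 < - Xv / (m * `|h| ^+ 3 + 1) by rewrite divr_gt0 ?oppr_gt0 // ltr_wpDl.
have := key _ t0.
set K := m * `|h| ^+ 3.
have K1 : 0 < K + 1 by rewrite ltr_wpDl.
rewrite mulNr mulrA mulrC mulrA lerNl -mulrA => hh.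
have : - Xv * K <= - Xv * (K + 1) by rewrite ler_wpM2l ?oppr_ge0 ?ltW //; lra.
move=> _; have := ler_wpM2l (ltW K1) hh.
move=> hh2.
have e1 : (K + 1) * ((K + 1)^-1 * (K * - Xv)) = K * - Xv.
  by field; rewrite gt_eqF.
rewrite e1 in hh2; nra.
Qed.
End Tay.


Section Blk.
Context {R : realType} {X : hilbertType R}.
Implicit Types x y z : X.

Lemma einv_ge0 (b : \bar R) : (0 < b)%E -> 0 <= einv b.
Proof. by case: b => //= r; rewrite lte_fin => r0; rewrite invr_ge0 ltW. Qed.

Lemma cocoer_lip (C : X -> X) b : (0 < b)%E -> cocoercive C b ->
  forall x y, `|C x - C y| <= einv b * `|x - y|.
Proof.
case: b => //= [r|]; last by move=> _ hC x y; rewrite (hC x y) subrr normr0 mul0r.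
rewrite lte_fin => r0 hC x y.
have h := le_trans (hC x y) (inner_le _ _).
have [d0|d0] := eqVneq `|C x - C y| 0; first by rewrite d0 mulr_ge0 // invr_ge0 ltW.
have dp : 0 < `|C x - C y| by rewrite lt_def d0 normr_ge0.
have h' : r * `|C x - C y| <= `|x - y| by rewrite -(ler_pM2r dp) -mulrA -expr2.
by rewrite ler_pdivlMl.
Qed.

Lemma cocoer_key (C : X -> X) b : (0 < b)%E -> cocoercive C b ->
  forall x z g, - (einv b / 4 * `|x - z| ^+ 2) <= inner (x - g) (C z - C g).
Proof.
case: b => //= [r|]; last first.
  by move=> _ hC x z g; rewrite (hC z g) subrr inner0r /= !mul0r oppr0.
rewrite lte_fin => r0 hC x z g.
have -> : x - g = (z - g) + (x - z) by rewrite [RHS]addrC addrA subrK.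
rewrite innerDl.
have h1 := hC z g.
have h2 := inner_ge (x - z) (C z - C g).
set a := `|x - z| in h2 *; set d := `|C z - C g| in h1 h2 *.
have : 0 <= (2 * r * d - a) ^+ 2 by rewrite sqr_ge0.
move=> hs.
have e : r^-1 / 4 * a ^+ 2 = (a ^+ 2) / (4 * r) by field; rewrite gt_eqF.
rewrite e.
have hh : - (a ^+ 2 / (4 * r)) <= r * d ^+ 2 - a * d.
  rewrite lerNl opprB ler_pdivlMr ?mulr_gt0 //.
  nra.
lra.
Qed.

Lemma cocoer_mon (C : X -> X) b : (0 < b)%E -> cocoercive C b -> monotone_fun C.
Proof.
move=> b0 hC x y; have := cocoer_key C b b0 hC x x y.
by rewrite subrr normr0 expr0n /= mulr0 oppr0.
Qed.

Lemma nD2 x y : `|x + y| <= `|x| + `|y|. Proof. exact: ler_normD. Qed.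
Lemma nB2 x y : `|x - y| <= `|x| + `|y|.
Proof. by apply: le_trans (ler_normD _ _) _; rewrite normrN. Qed.
Lemma nD3 x y z : `|x + y + z| <= `|x| + `|y| + `|z|.
Proof. by apply: le_trans (ler_normD _ _) _; rewrite lerD2r ler_normD. Qed.
Lemma nD4 x y z u : `|x + y + z + u| <= `|x| + `|y| + `|z| + `|u|.
Proof. by apply: le_trans (ler_normD _ _) _; rewrite lerD2r nD3. Qed.

Lemma nB5 x y z u v : `|x - y - z - u - v| <= `|x| + `|y| + `|z| + `|u| + `|v|.
Proof.
apply: le_trans (nB2 _ _) _; rewrite lerD2r.
apply: le_trans (nB2 _ _) _; rewrite lerD2r.
apply: le_trans (nB2 _ _) _; rewrite lerD2r.
exact: nB2.
Qed.

Lemma nB4 x y z u : `|x - y - z - u| <= `|x| + `|y| + `|z| + `|u|.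
Proof.
apply: le_trans (nB2 _ _) _; rewrite lerD2r.
apply: le_trans (nB2 _ _) _; rewrite lerD2r.
exact: nB2.
Qed.

Lemma resolv x1 s1 x2 s2 : 0 <= inner (x1 - x2) (s1 - s2) ->
  `|x1 - x2| <= `|(s1 + x1) - (s2 + x2)|.
Proof.
move=> h; set d := x1 - x2.
have e : (s1 + x1) - (s2 + x2) = (s1 - s2) + d.
  apply: inner_eq => v; rewrite /d !(innerDr, innerNr); lra.
have key : `|d| ^+ 2 <= `|d| * `|(s1 + x1) - (s2 + x2)|.
  rewrite -inner_normE; apply: le_trans _ (inner_le d _).
  rewrite e [in X in _ <= X]innerDr -/d; lra.
have [d0|d0] := eqVneq `|d| 0; first by rewrite d0.
rewrite expr2 ler_pM2l // in key; by rewrite lt_def d0 normr_ge0.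
Qed.

Lemma lipB (B : X -> X) l x : lipschitz_with B l -> `|B x| <= `|B 0| + l * `|x|.
Proof.
move=> hB; have := hB x 0; rewrite subr0 => h.
have -> : B x = (B x - B 0) + B 0 by rewrite subrK.
apply: le_trans (ler_normD _ _) _; lra.
Qed.

Variables (A : X -> set X) (B C D : X -> X) (l : R) (beta : \bar R) (m : R).
Hypothesis hb : block_hyp A B C D l beta m.

Lemma Top_mon x1 y1 x2 y2 : Top A B C D x1 y1 -> Top A B C D x2 y2 ->
  0 <= inner (x1 - x2) (y1 - y2).
Proof.
case: hb => [[Am _] [Bm _] [b0 Cc] [Dm _ _ _]].
move=> [a1 ha1 ->] [a2 ha2 ->].
rewrite innerBr !innerDr.
have := Am _ _ _ _ ha1 ha2; have := Bm x1 x2; have := cocoer_mon C beta b0 Cc x1 x2;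
  have := Dm x1 x2. rewrite !innerBr. lra.
Qed.


Lemma y_form {inD rhohat thlo thhi dhat Gz w rho x y} :
  ps_block A B C D l beta m inD rhohat thlo thhi dhat Gz w rho x y ->
  (~~ inD -> forall h, D h = 0) ->
  ~ Top A B C D Gz w ->
  0 < rho /\ exists2 a, A x a & y = a + B x + C Gz + D x.
Proof.
move=> [_ hii hiii] D0 nT.
case: (boolP inD) => iD.
  have [r0 [s [s' [a ha ->] ->] hr] _ ->] := hii nT iD.
  split => //; exists a => //; apply: inner_eq => d.
  have := congr1 (inner d) hr.
  rewrite /linz !(innerDr, innerNr, innerZr) => e.
  have ee : inner d Gz - inner d x = rho * (inner d a + (inner d (D Gz) + inner d ('d D Gz (x - Gz))) - inner d w + (inner d (B Gz) + inner d (C Gz))) by lra.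
  rewrite ?(innerDr, innerNr, innerZr) ee mulKf ?gt_eqF //.
  lra.
have [r0 [s [a ha ->] hr] ->] := hiii nT iD.
split => //; exists a => //; apply: inner_eq => d.
have := congr1 (inner d) hr.
rewrite !(innerDr, innerNr, innerZr) => e.
have ee : inner d Gz - inner d x = rho * (inner d a - inner d w + (inner d (B Gz) + inner d (C Gz))) by lra.
rewrite ?(innerDr, innerNr, innerZr) ee mulKf ?gt_eqF // (D0 iD) inner0r.
lra.
Qed.

Lemma fej {inD rhohat thlo thhi dhat Gz w rho x y g t} :
  ps_block A B C D l beta m inD rhohat thlo thhi dhat Gz w rho x y ->
  (~~ inD -> forall h, D h = 0) ->
  Top A B C D g t ->
  - (einv beta / 4 * `|x - Gz| ^+ 2) <= inner (x - g) (y - t).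
Proof.
move=> hp D0 hT.
case: (hb) => [[Am _] [Bm _] [b0 Cc] [Dm _ _ _]].
have [T1|nT] := pselect (Top A B C D Gz w).
  case: hp => [/(_ T1) [_ -> ->] _ _].
  rewrite subrr normr0 expr0n /= mulr0 oppr0; exact: Top_mon.
have [_ [a ha ->]] := y_form hp D0 nT.
case: hT => [a' ha' ->].
have := Am _ _ _ _ ha ha'; have := Bm x g; have := cocoer_key C beta b0 Cc x Gz g;
  have := Dm x g.
rewrite !(innerDr, innerNr). lra.
Qed.


Lemma linz_diff u x1 x2 : linz D u x1 - linz D u x2 = 'd D u (x1 - x2).
Proof.
have -> : x1 - x2 = (x1 - u) - (x2 - u) by rewrite opprB addrA subrK.
rewrite linearB /linz; apply: inner_eq => d; rewrite !(innerDr, innerNr); lra.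
Qed.

Lemma bnd_D rhohat thlo thhi dhat (Gz w : nat -> X) (rho : nat -> R)
  (x y : nat -> X) g t MG MW :
  0 < thlo -> thlo <= thhi -> 0 < rhohat -> 0 < dhat ->
  (forall k, `|Gz k| <= MG) -> (forall k, `|w k| <= MW) ->
  (forall k, ps_block A B C D l beta m true rhohat thlo thhi dhat
     (Gz k) (w k) (rho k) (x k) (y k)) ->
  Top A B C D g t ->
  exists lo hi Mx My, [/\ 0 < lo, forall k, lo <= rho k <= hi,
     forall k, `|x k| <= Mx & forall k, `|y k| <= My].
Proof.
move=> thl0 thlh rh0 dh0 hG hW hps hT.
case: (hb) => [[Am _] [Bm [l0 Bl]] [b0 Cc] [Dm Dd m0 Dl]].
have MG0 : 0 <= MG by exact: le_trans (normr_ge0 _) (hG 0%N).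
have MW0 : 0 <= MW by exact: le_trans (normr_ge0 _) (hW 0%N).
have eb0 := einv_ge0 _ b0.
case: hT => a0 ha0 _.
pose U := rhohat + thhi / dhat.
have thh0 : 0 < thhi by apply: lt_le_trans thlh.
have U0 : 0 < U by rewrite /U addr_gt0 // divr_gt0.
have rhoU k : 0 < rho k /\ rho k <= U.
  have [T1|nT] := pselect (Top A B C D (Gz k) (w k)).
    case: (hps k) => [/(_ T1) [-> _ _] _ _]; split => //.
    by rewrite /U lerDl divr_ge0 // ltW.
  case: (hps k) => [_ /(_ nT isT) [r0 _ /andP[q1 q2] _] _]; split => //.
  suff : rho k <= thhi / dhat by move=> h; apply: le_trans h _; rewrite /U lerDr ltW.
  rewrite ler_pdivlMr //; apply: le_trans q2.
  have h1 : 0 <= 4 * l ^+ 2 * rho k ^+ 2 by rewrite !mulr_ge0 // ?exprn_ge0 // ltW.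
  have h2 : 0 <= (m * rho k * `|x k - Gz k|) ^+ 2 by rewrite sqr_ge0.
  have h3 : 0 <= einv beta * rho k by rewrite mulr_ge0 // ltW.
  rewrite mulrDl [rho k * _]mulrC; lra.
pose MB := `|B 0| + l * MG.
have hBG k : `|B (Gz k)| <= MB.
  by apply: le_trans (lipB B l (Gz k) Bl) _; rewrite lerD2l ler_wpM2l.
pose MC := `|C 0| + einv beta * MG.
have hCG k : `|C (Gz k)| <= MC.
  by apply: le_trans (lipB C (einv beta) (Gz k) (cocoer_lip C beta b0 Cc)) _; rewrite lerD2l ler_wpM2l.
pose ML := `|D g| + m * (`|g| + MG) ^+ 2.
have hL k : `|linz D (Gz k) g| <= ML.
  have := taylor D m Dd Dl m0 (Gz k) (g - Gz k).
  have -> : Gz k + (g - Gz k) = g by rewrite addrC subrK.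
  have -> : linz D (Gz k) g = D g - (D g - D (Gz k) - 'd D (Gz k) (g - Gz k)).
    by rewrite /linz; apply: inner_eq => d; rewrite !(innerDr, innerNr); lra.
  move=> ht; apply: le_trans (nB2 _ _) _; rewrite lerD2l.
  apply: le_trans ht _; apply: ler_wpM2l => //.
  have h1 : `|g - Gz k| <= `|g| + MG by apply: le_trans (nB2 _ _) _; rewrite lerD2l.
  by rewrite !expr2 ler_pM.
have ML0 : 0 <= ML by rewrite addr_ge0 // mulr_ge0 // exprn_ge0 // addr_ge0.
pose Mx := MG + `|g| + U * (MW + MB + MC + `|a0| + ML) + `|g|.
have hx k : `|x k| <= Mx.
  have MB0 : 0 <= MB by exact: le_trans (normr_ge0 _) (hBG 0%N).
  have MC0 : 0 <= MC by exact: le_trans (normr_ge0 _) (hCG 0%N).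
  have Q0 : 0 <= U * (MW + MB + MC + `|a0| + ML).
    by apply: mulr_ge0; [exact: ltW | have := normr_ge0 a0; lra].
  have [T1|nT] := pselect (Top A B C D (Gz k) (w k)).
    case: (hps k) => [/(_ T1) [_ -> _] _ _].
    by apply: le_trans (hG k) _; rewrite /Mx; have := normr_ge0 g; lra.
  case: (hps k) => [_ /(_ nT isT) [r0 [s [s' [a ha ->] ->] hr] _ _] _].
  have hxg : `|x k - g| <= `|(rho k *: (a + linz D (Gz k) (x k)) + x k) -
       (rho k *: (a0 + linz D (Gz k) g) + g)|.
    apply: resolv.
    have := Am _ _ _ _ ha ha0; have := dpsd D m Dd Dl m0 Dm (Gz k) (x k - g).
    rewrite -linz_diff => h1 h2.
    rewrite -scalerBr innerZr; apply: mulr_ge0; first exact: ltW.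
    have -> : a + linz D (Gz k) (x k) - (a0 + linz D (Gz k) g) =
      (a - a0) + (linz D (Gz k) (x k) - linz D (Gz k) g).
      by apply: inner_eq => d; rewrite !(innerDr, innerNr); lra.
    rewrite innerDr; lra.
  rewrite -hr in hxg.
  have e : Gz k + rho k *: w k - rho k *: (B (Gz k) + C (Gz k)) -
      (rho k *: (a0 + linz D (Gz k) g) + g) =
      (Gz k - g) + rho k *: (w k - B (Gz k) - C (Gz k) - a0 - linz D (Gz k) g).
    by apply: inner_eq => d; rewrite !(innerDr, innerNr, innerZr); ring.
  rewrite e in hxg.
  have hV := nB5 (w k) (B (Gz k)) (C (Gz k)) a0 (linz D (Gz k) g).
  have hV2 : `|w k - B (Gz k) - C (Gz k) - a0 - linz D (Gz k) g| <=
      MW + MB + MC + `|a0| + ML.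
    apply: le_trans hV _; have := hW k; have := hBG k; have := hCG k; have := hL k; lra.
  have hr2 : `|rho k *: (w k - B (Gz k) - C (Gz k) - a0 - linz D (Gz k) g)| <=
      U * (MW + MB + MC + `|a0| + ML).
    rewrite normrZ gtr0_norm //; apply: ler_pM => //; [exact: ltW | exact: (rhoU k).2].
  have hxx : `|x k| <= `|x k - g| + `|g|.
    by apply: le_trans (ler_normD _ _); rewrite subrK.
  have := nB2 (Gz k) g; have := ler_normD (Gz k - g) (rho k *: (w k - B (Gz k) - C (Gz k) - a0 - linz D (Gz k) g)).
  have := hG k; rewrite /Mx; lra.
have Mx0 : 0 <= Mx by exact: le_trans (normr_ge0 _) (hx 0%N).
have hq k : `|x k - Gz k| <= Mx + MG.
  by apply: le_trans (nB2 _ _) _; rewrite lerD ?hx ?hG.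
pose W := 4 * l ^+ 2 * U + (einv beta + dhat) + m ^+ 2 * U * (Mx + MG) ^+ 2.
have W0 : 0 < W.
  have Wa : 0 <= 4 * l ^+ 2 * U by rewrite !mulr_ge0 // ?exprn_ge0 // ltW.
  have Wc : 0 <= m ^+ 2 * U * (Mx + MG) ^+ 2.
    apply: mulr_ge0; last by rewrite exprn_ge0 // addr_ge0.
    by apply: mulr_ge0; [exact: exprn_ge0 | exact: ltW].
  rewrite /W; lra.
pose lo := Num.min rhohat (thlo / W).
have lo0 : 0 < lo by rewrite /lo lt_min rh0 divr_gt0.
have rholo k : lo <= rho k.
  have [T1|nT] := pselect (Top A B C D (Gz k) (w k)).
    by case: (hps k) => [/(_ T1) [-> _ _] _ _]; rewrite /lo ge_min lexx.
  case: (hps k) => [_ /(_ nT isT) [r0 _ /andP[q1 q2] _] _].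
  rewrite /lo ge_min; apply/orP; right; rewrite ler_pdivrMr //.
  apply: le_trans q1 _.
  set q := `|x k - Gz k|.
  have -> : 4 * l ^+ 2 * rho k ^+ 2 + (einv beta + dhat) * rho k + (m * rho k * q) ^+ 2
     = rho k * (4 * l ^+ 2 * rho k + (einv beta + dhat) + m ^+ 2 * rho k * q ^+ 2) by ring.
  apply: ler_wpM2l; first exact: ltW.
  rewrite /W; apply: lerD; first apply: lerD => //.
    by rewrite ler_wpM2l ?(rhoU k).2 // mulr_ge0 // exprn_ge0.
  apply: ler_pM.
  - by apply: mulr_ge0; [exact: exprn_ge0 | exact: ltW].
  - exact: sqr_ge0.
  - by rewrite ler_wpM2l ?(rhoU k).2 // exprn_ge0.
  - by rewrite !expr2 ler_pM // ?/q ?normr_ge0 ?hq.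
pose My := lo^-1 * (MG + Mx) + MW + (`|B 0| + l * Mx + MB) + m * (Mx + MG) ^+ 2.
have hy k : `|y k| <= My.
  have MB0 : 0 <= MB by exact: le_trans (normr_ge0 _) (hBG 0%N).
  have P1 : 0 <= lo^-1 * (MG + Mx) by apply: mulr_ge0; [rewrite invr_ge0 ltW | lra].
  have P2 : 0 <= m * (Mx + MG) ^+ 2 by apply: mulr_ge0 => //; rewrite exprn_ge0 //; lra.
  have P3 : 0 <= `|B 0| + l * Mx by apply: addr_ge0 => //; exact: mulr_ge0.
  have [T1|nT] := pselect (Top A B C D (Gz k) (w k)).
    case: (hps k) => [/(_ T1) [_ _ ->] _ _].
    by apply: le_trans (hW k) _; rewrite /My; lra.
  case: (hps k) => [_ /(_ nT isT) [r0 _ _ ->] _].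
  apply: le_trans (nD4 _ _ _ _) _.
  have h1 : `|(rho k)^-1 *: (Gz k - x k)| <= lo^-1 * (MG + Mx).
    rewrite normrZ gtr0_norm ?invr_gt0 //; apply: ler_pM.
    - by rewrite invr_ge0 ltW.
    - exact: normr_ge0.
    - by rewrite lef_pV2 ?posrE ?rholo.
    - by apply: le_trans (nB2 _ _) _; rewrite lerD ?hx ?hG.
  have h2 : `|B (x k) - B (Gz k)| <= `|B 0| + l * Mx + MB.
    apply: le_trans (nB2 _ _) _; apply: lerD => //.
    by apply: le_trans (lipB B l (x k) Bl) _; rewrite lerD2l ler_wpM2l.
  have h3 : `|D (x k) - linz D (Gz k) (x k)| <= m * (Mx + MG) ^+ 2.
    have := taylor D m Dd Dl m0 (Gz k) (x k - Gz k).
    have -> : Gz k + (x k - Gz k) = x k by rewrite addrC subrK.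
    have -> : D (x k) - linz D (Gz k) (x k) = D (x k) - D (Gz k) - 'd D (Gz k) (x k - Gz k).
      by rewrite /linz opprD addrA.
    move=> ht; apply: le_trans ht _; apply: ler_wpM2l => //.
    by rewrite !expr2 ler_pM // hq.
  have := hW k; rewrite /My; lra.
exists lo, U, Mx, My; split => // k.
by rewrite rholo (rhoU k).2.
Qed.


Lemma bnd_nD rhohat thlo thhi dhat (Gz w : nat -> X) (rho : nat -> R)
  (x y : nat -> X) g t MG MW rlo rhi :
  0 < rhohat -> 0 < rlo -> rlo <= rhi ->
  (forall k, ~ Top A B C D (Gz k) (w k) -> rlo <= rho k <= rhi) ->
  (forall k, `|Gz k| <= MG) -> (forall k, `|w k| <= MW) ->
  (forall k, ps_block A B C D l beta m false rhohat thlo thhi dhat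
     (Gz k) (w k) (rho k) (x k) (y k)) ->
  Top A B C D g t ->
  exists lo hi Mx My, [/\ 0 < lo, forall k, lo <= rho k <= hi,
     forall k, `|x k| <= Mx & forall k, `|y k| <= My].
Proof.
move=> rh0 rl0 rlh hr8 hG hW hps hT.
case: (hb) => [[Am _] [Bm [l0 Bl]] [b0 Cc] [Dm Dd m0 Dl]].
have MG0 : 0 <= MG by exact: le_trans (normr_ge0 _) (hG 0%N).
have MW0 : 0 <= MW by exact: le_trans (normr_ge0 _) (hW 0%N).
have eb0 := einv_ge0 _ b0.
case: hT => a0 ha0 _.
pose U := rhohat + rhi.
have rhi0 : 0 < rhi by apply: lt_le_trans rlh.
have U0 : 0 < U by rewrite /U addr_gt0.
pose lo := Num.min rhohat rlo.
have lo0 : 0 < lo by rewrite /lo lt_min rh0 rl0.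
have rhoU k : lo <= rho k /\ rho k <= U.
  have [T1|nT] := pselect (Top A B C D (Gz k) (w k)).
    case: (hps k) => [/(_ T1) [-> _ _] _ _]; split.
      by rewrite /lo ge_min lexx.
    by rewrite /U lerDl ltW.
  have /andP[q1 q2] := hr8 k nT; split.
    by rewrite /lo ge_min q1 orbT.
  by apply: le_trans q2 _; rewrite /U lerDr ltW.
have rho0 k : 0 < rho k by apply: lt_le_trans lo0 (rhoU k).1.
pose MB := `|B 0| + l * MG.
have hBG k : `|B (Gz k)| <= MB.
  by apply: le_trans (lipB B l (Gz k) Bl) _; rewrite lerD2l ler_wpM2l.
pose MC := `|C 0| + einv beta * MG.
have hCG k : `|C (Gz k)| <= MC.
  by apply: le_trans (lipB C (einv beta) (Gz k) (cocoer_lip C beta b0 Cc)) _; rewrite lerD2l ler_wpM2l.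
have MB0 : 0 <= MB by exact: le_trans (normr_ge0 _) (hBG 0%N).
have MC0 : 0 <= MC by exact: le_trans (normr_ge0 _) (hCG 0%N).
pose Mx := MG + `|g| + U * (MW + MB + MC + `|a0|) + `|g|.
have hx k : `|x k| <= Mx.
  have Q0 : 0 <= U * (MW + MB + MC + `|a0|).
    by apply: mulr_ge0; [exact: ltW | have := normr_ge0 a0; lra].
  have [T1|nT] := pselect (Top A B C D (Gz k) (w k)).
    case: (hps k) => [/(_ T1) [_ -> _] _ _].
    by apply: le_trans (hG k) _; rewrite /Mx; have := normr_ge0 g; lra.
  case: (hps k) => [_ _ /(_ nT isT) [r0 [s [a ha ->] hr] _]].
  have hxg : `|x k - g| <= `|(rho k *: a + x k) - (rho k *: a0 + g)|.
    apply: resolv.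
    have := Am _ _ _ _ ha ha0 => h2.
    by rewrite -scalerBr innerZr; apply: mulr_ge0; first exact: ltW.
  rewrite -hr in hxg.
  have e : Gz k + rho k *: w k - rho k *: (B (Gz k) + C (Gz k)) - (rho k *: a0 + g) =
      (Gz k - g) + rho k *: (w k - B (Gz k) - C (Gz k) - a0).
    by apply: inner_eq => d; rewrite !(innerDr, innerNr, innerZr); ring.
  rewrite e in hxg.
  have hV := nB4 (w k) (B (Gz k)) (C (Gz k)) a0.
  have hV2 : `|w k - B (Gz k) - C (Gz k) - a0| <= MW + MB + MC + `|a0|.
    apply: le_trans hV _; have := hW k; have := hBG k; have := hCG k; lra.
  have hr2 : `|rho k *: (w k - B (Gz k) - C (Gz k) - a0)| <= U * (MW + MB + MC + `|a0|).
    rewrite normrZ gtr0_norm //; apply: ler_pM => //; [exact: ltW | exact: (rhoU k).2].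
  have hxx : `|x k| <= `|x k - g| + `|g|.
    by apply: le_trans (ler_normD _ _); rewrite subrK.
  have := nB2 (Gz k) g; have := ler_normD (Gz k - g) (rho k *: (w k - B (Gz k) - C (Gz k) - a0)).
  have := hG k; rewrite /Mx; lra.
have Mx0 : 0 <= Mx by exact: le_trans (normr_ge0 _) (hx 0%N).
pose My := lo^-1 * (MG + Mx) + MW + (`|B 0| + l * Mx + MB).
have hy k : `|y k| <= My.
  have P1 : 0 <= lo^-1 * (MG + Mx) by apply: mulr_ge0; [rewrite invr_ge0 ltW | lra].
  have P3 : 0 <= `|B 0| + l * Mx by apply: addr_ge0 => //; exact: mulr_ge0.
  have [T1|nT] := pselect (Top A B C D (Gz k) (w k)).
    case: (hps k) => [/(_ T1) [_ _ ->] _ _].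
    by apply: le_trans (hW k) _; rewrite /My; lra.
  case: (hps k) => [_ _ /(_ nT isT) [r0 _ ->]].
  apply: le_trans (nD3 _ _ _) _.
  have h1 : `|(rho k)^-1 *: (Gz k - x k)| <= lo^-1 * (MG + Mx).
    rewrite normrZ gtr0_norm ?invr_gt0 //; apply: ler_pM.
    - by rewrite invr_ge0 ltW.
    - exact: normr_ge0.
    - by rewrite lef_pV2 ?posrE ?(rhoU k).1.
    - by apply: le_trans (nB2 _ _) _; rewrite lerD ?hx ?hG.
  have h2 : `|B (x k) - B (Gz k)| <= `|B 0| + l * Mx + MB.
    apply: le_trans (nB2 _ _) _; apply: lerD => //.
    by apply: le_trans (lipB B l (x k) Bl) _; rewrite lerD2l ler_wpM2l.
  have := hW k; rewrite /My; lra.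
exists lo, U, Mx, My; split => // k.
by rewrite (rhoU k).1 (rhoU k).2.
Qed.

End Blk.


Section Fe.
Context {R : realType}.

Lemma le_sum_one (I : finType) (F : I -> R) i :
  (forall j, 0 <= F j) -> F i <= \sum_j F j.
Proof. by move=> h; rewrite (bigD1 i) //= lerDl sumr_ge0. Qed.

Lemma sum_expand k (Hs : 'I_k -> hilbertType R) (W U : forall j, Hs j) (a : R) :
  \sum_j `|W j - a *: U j| ^+ 2 =
  \sum_j `|W j| ^+ 2 - 2 * a * \sum_j inner (W j) (U j) + a ^+ 2 * \sum_j `|U j| ^+ 2.
Proof.
have e j : `|W j - a *: U j| ^+ 2 =
    `|W j| ^+ 2 - 2 * a * inner (W j) (U j) + a ^+ 2 * `|U j| ^+ 2.
  by rewrite normB2 innerZr normrZ exprMn real_normK ?num_real //; ring.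
rewrite (eq_bigr _ (fun j _ => e j)) !big_split /= sumrN -!mulr_sumr.
by [].
Qed.

Lemma absorb (a : R) : 0 <= a -> a <= 1 + a ^+ 2.
Proof. move=> a0; nra. Qed.

Lemma Gs_bound (X Y : hilbertType R) (G : X -> Y) (Gs : Y -> X) :
  bounded_linear G -> is_adjoint G Gs ->
  exists M, 0 <= M /\ forall y, `|Gs y| <= M * `|y|.
Proof.
move=> [_ [M hM]] hadj; exists `|M|; split => // y.
have key : `|Gs y| ^+ 2 <= `|Gs y| * (`|M| * `|y|).
  rewrite -inner_normE -hadj; apply: le_trans (inner_le _ _) _.
  rewrite mulrA ler_wpM2r //; apply: le_trans (hM _) _.
  by rewrite mulrC ler_wpM2l // ler_norm.
have [d0|d0] := eqVneq `|Gs y| 0; first by rewrite d0 mulr_ge0.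
rewrite expr2 ler_pM2l // in key; by rewrite lt_def d0 normr_ge0.
Qed.

Lemma G_bound (X Y : hilbertType R) (G : X -> Y) :
  bounded_linear G -> exists M, 0 <= M /\ forall y, `|G y| <= M * `|y|.
Proof.
move=> [_ [M hM]]; exists `|M|; split => // y.
by apply: le_trans (hM _) _; rewrite ler_wpM2r // ler_norm.
Qed.

End Fe.


Lemma step_alg {R : realType} {Vk Vk1 a P phi pi tau : R} :
  Vk1 = Vk - 2 * a * P + a ^+ 2 * pi -> phi <= P -> 0 < phi ->
  0 <= tau <= 2 -> 0 <= pi -> a = tau * phi / pi -> Vk1 <= Vk.
Proof.
move=> -> hP hphi /andP[t0 t2] pi0 ha.
have [pz|pnz] := eqVneq pi 0.
  rewrite ha pz invr0 mulr0 le_eqVlt; apply/orP; left; apply/eqP; ring.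
have a0 : 0 <= a by rewrite ha divr_ge0 // mulr_ge0 // ltW.
have api : a * pi = tau * phi by rewrite ha -mulrA mulVf // mulr1.
have : a ^+ 2 * pi = a * (tau * phi) by rewrite -api expr2 mulrA.
move=> ->; have h1 : tau * phi <= 2 * P by nra.
have : 0 <= a * (2 * P - tau * phi) by apply: mulr_ge0 => //; lra.
nra.
Qed.

Lemma sum4 (I : finType) (R : realType) (F1 F2 F3 F4 : I -> R) :
  \sum_i (F1 i - F2 i - F3 i + F4 i) =
  \sum_i F1 i - \sum_i F2 i - \sum_i F3 i + \sum_i F4 i.
Proof. by rewrite !big_split /= !sumrN. Qed.

Theorem lemma4p3 (R : realType) (n : nat)
  (H0 : hilbertType R) (Hs : 'I_n.-1 -> hilbertType R)
  (G : forall o, H0 -> Hblk H0 Hs o) (Gs : forall o, Hblk H0 Hs o -> H0)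
  (A : forall o, Hblk H0 Hs o -> set (Hblk H0 Hs o))
  (B C D : forall o, Hblk H0 Hs o -> Hblk H0 Hs o)
  (l : option 'I_n.-1 -> R) (beta : option 'I_n.-1 -> \bar R)
  (m : option 'I_n.-1 -> R) (inD : option 'I_n.-1 -> bool)
  (taulo tauhi thlo thhi rhohat dhat gamma : R)
  (z : nat -> H0) (w : nat -> forall o, Hblk H0 Hs o)
  (rho : nat -> option 'I_n.-1 -> R)
  (x y : nat -> forall o, Hblk H0 Hs o) (tau : nat -> R) :
  (2 <= n)%N ->
  (* (A1): G_i bounded linear with adjoint Gs_i = G_i^*, G_n = I *)
  (forall o, bounded_linear (G o)) ->
  (forall o, is_adjoint (G o) (Gs o)) ->
  (forall h : H0, G None h = h) ->
  (* (A2)-(A5) *)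
  (forall o, block_hyp (A o) (B o) (C o) (D o) (l o) (beta o) (m o)) ->
  (* (A6) *)
  (exists (zs : H0) (t : forall o, Hblk H0 Hs o),
      (forall o, Top (A o) (B o) (C o) (D o) (G o zs) (t o)) /\
      \sum_(o : option 'I_n.-1) Gs o (t o) = 0) ->
  (* (A7) *)
  (forall o, (inD o -> 0 < m o) /\
            (~~ inD o -> m o = 0 /\ forall h, D o h = 0)) ->
  (* parameters of Algorithm PS *)
  0 < taulo -> taulo < tauhi -> tauhi < 2 ->
  0 < thlo -> thlo < thhi -> thhi < 2 ->
  0 < rhohat -> 0 < dhat -> 0 < gamma ->
  (* w_n^k := - sum_{i<n} G_i^* w_i^k *)
  (forall k, w k None = - \sum_(j < n.-1) Gs (Some j) (w k (Some j))) ->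
  (* rules (i)-(iii) for every block and every iteration *)
  (forall k o, ps_block (A o) (B o) (C o) (D o) (l o) (beta o) (m o) (inD o)
      rhohat thlo thhi dhat (G o (z k)) (w k o) (rho k o) (x k o) (y k o)) ->
  (* projection / update step *)
  (forall k,
     let u := fun j : 'I_n.-1 => x k (Some j) - G (Some j) (x k None) in
     let v := \sum_(o : option 'I_n.-1) Gs o (y k o) in
     let phi := inner (z k) v + \sum_(j < n.-1) inner (w k (Some j)) (u j)
        - \sum_(o : option 'I_n.-1)
            (inner (x k o) (y k o)
             + einv (beta o) / 4 * `|x k o - G o (z k)| ^+ 2) in
     let pi := gamma^-1 * `|v| ^+ 2 + \sum_(j < n.-1) `|u j| ^+ 2 in
     let alpha := tau k * phi / pi in
     if 0 < phi then
       [/\ taulo <= tau k <= tauhi,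
           z k.+1 = z k - (gamma^-1 * alpha) *: v &
           forall j, w k.+1 (Some j) = w k (Some j) - alpha *: u j]
     else z k.+1 = z k /\ forall j, w k.+1 (Some j) = w k (Some j)) ->
  (* (A8) *)
  (forall o, ~~ inD o ->
     exists rlo rhi : R, [/\ 0 < rlo, rlo <= rhi,
       rhi * (einv (beta o) / 4 + l o) < 1 &
       forall k, ~ Top (A o) (B o) (C o) (D o) (G o (z k)) (w k o) ->
         rlo <= rho k o <= rhi]) ->
  [/\ (* (a) *) forall o, exists M : R, forall k, `|rho k o| <= M,
      (* (b) *) forall o, exists M : R, forall k, `|x k o| <= M,
      (* (c) *) exists rmin rmax : R, 0 < rmin /\
                  forall k o, rmin <= rho k o <= rmax &
      (* (d) *) forall o, exists M : R, forall k, `|y k o| <= M].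

Proof.
move=> n2 hG hadj hGN hb [zs [t [hTt hsum]]] hA7 tl0 tlh th2 thl0 thlh thh2
  rh0 dh0 g0 hwN hps hupd hA8.
pose V k := gamma * `|z k - zs| ^+ 2 +
  \sum_(j < n.-1) `|w k (Some j) - t (Some j)| ^+ 2.
have Vdec k : V k.+1 <= V k.
  have H := hupd k; cbv zeta in H.
  set v := \sum_(o : option 'I_n.-1) Gs o (y k o) in H.
  set S := \sum_o (inner (x k o) (y k o) + einv (beta o) / 4 * `|x k o - G o (z k)| ^+ 2) in H.
  set SU := \sum_(j < n.-1) inner (w k (Some j)) (x k (Some j) - G (Some j) (x k None)) in H.
  set phi := inner (z k) v + SU - S in H.
  set pi := gamma^-1 * `|v| ^+ 2 + \sum_(j < n.-1) `|x k (Some j) - G (Some j) (x k None)| ^+ 2 in H.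
  set a := tau k * phi / pi in H.
  move: H; case: ifP => hphi; last first.
    by move=> [hz hw]; rewrite /V hz; under eq_bigr do rewrite hw.
  move=> [/andP[tl th] hz hw].
  pose P := inner (z k - zs) v + \sum_(j < n.-1) inner (w k (Some j) - t (Some j))
     (x k (Some j) - G (Some j) (x k None)).
  have eqV : V k.+1 = V k - 2 * a * P + a ^+ 2 * pi.
    rewrite /V hz; under eq_bigr do rewrite hw.
    have -> : z k - (gamma^-1 * a) *: v - zs = (z k - zs) - (gamma^-1 * a) *: v by rewrite addrAC.
    under eq_bigr do rewrite addrAC.
    rewrite normB2 innerZr normrZ exprMn real_normK ?num_real //.
    rewrite (@sum_expand _ _ _ (fun j => w k (Some j) - t (Some j))
        (fun j => x k (Some j) - G (Some j) (x k None)) a).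
    rewrite /P /pi; field; exact: lt0r_neq0.
  have hPphi : phi <= P.
    set ST := \sum_(j < n.-1) inner (t (Some j)) (x k (Some j) - G (Some j) (x k None)).
    have eP : P = inner (z k) v - inner zs v + SU - ST.
      rewrite /P innerBl; under eq_bigr do rewrite innerBl.
      by rewrite sumrB /SU /ST; ring.
    have eA : inner zs v = \sum_o inner (G o zs) (y k o).
      by rewrite /v inner_sumr; apply: eq_bigr => o _; rewrite hadj.
    have hs : Gs None (t None) + \sum_(j < n.-1) Gs (Some j) (t (Some j)) = 0.
      by have := hsum; rewrite big_opt.
    have hs2 : \sum_(j < n.-1) Gs (Some j) (t (Some j)) = - Gs None (t None).
      by apply/eqP; rewrite -subr_eq0 opprK addrC hs.
    have eST : ST = \sum_(j < n.-1) inner (x k (Some j)) (t (Some j)) +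
        inner (x k None) (t None).
      have e1 : ST = \sum_(j < n.-1) inner (x k (Some j)) (t (Some j)) -
          inner (x k None) (\sum_(j < n.-1) Gs (Some j) (t (Some j))).
        rewrite inner_sumr -sumrB /ST; apply: eq_bigr => j _.
        by rewrite innerBr -hadj [inner (t _) (x _ _)]innerC [inner (t _) (G _ _)]innerC.
      by rewrite e1 hs2 innerNr opprK -hadj hGN.
    have eE : \sum_o inner (G o zs) (t o) = 0.
      transitivity (inner zs (\sum_o Gs o (t o))); last by rewrite hsum inner0r.
      by rewrite inner_sumr; apply: eq_bigr => o _; rewrite hadj.
    have eX : \sum_o inner (x k o) (t o) = inner (x k None) (t None) +
        \sum_(j < n.-1) inner (x k (Some j)) (t (Some j)) by rewrite big_opt.
    have hF : 0 <= \sum_o ((inner (x k o) (y k o) + einv (beta o) / 4 * `|x k o - G o (z k)| ^+ 2)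
        - inner (x k o) (t o) - inner (G o zs) (y k o) + inner (G o zs) (t o)).
      apply: sumr_ge0 => o _.
      have hD0 : ~~ inD o -> forall h, D o h = 0 by move=> /(hA7 o).2 [].
      have := fej _ _ _ _ _ _ _ (hb o) (hps k o) hD0 (hTt o).
      rewrite !(innerBl, innerBr); lra.
    rewrite sum4 -/S eE -eA eX in hF.
    rewrite /phi eP eST; lra.
  apply: (step_alg eqV hPphi hphi) => //.
  - by rewrite (ltW (lt_le_trans tl0 tl)) (le_trans th (ltW th2)).
  - apply: addr_ge0; first by apply: mulr_ge0; [rewrite invr_ge0 ltW | exact: sqr_ge0].
    by apply: sumr_ge0 => j _; exact: sqr_ge0.
have VV k : V k <= V 0.
  by elim: k => // k IH; apply: le_trans (Vdec k) IH.
have Vsum0 k : 0 <= \sum_(j < n.-1) `|w k (Some j) - t (Some j)| ^+ 2.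
  by apply: sumr_ge0 => j _; exact: sqr_ge0.
pose MZ := `|zs| + (1 + V 0 / gamma).
have hz k : `|z k| <= MZ.
  have h1 : `|z k - zs| ^+ 2 <= V 0 / gamma.
    rewrite ler_pdivlMr // mulrC; apply: le_trans (VV k); rewrite /V; have := Vsum0 k; lra.
  have h2 := absorb _ (normr_ge0 (z k - zs)).
  have h3 : `|z k| <= `|z k - zs| + `|zs| by apply: le_trans (ler_normD _ _); rewrite subrK.
  rewrite /MZ; lra.
pose MWj (j : 'I_n.-1) := `|t (Some j)| + (1 + V 0).
have hwj k j : `|w k (Some j)| <= MWj j.
  have h1 : `|w k (Some j) - t (Some j)| ^+ 2 <= V 0.
    apply: le_trans (VV k); rewrite /V.
    have := @le_sum_one _ _ (fun j => `|w k (Some j) - t (Some j)| ^+ 2) j (fun j => sqr_ge0 _).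
    have : 0 <= gamma * `|z k - zs| ^+ 2 by apply: mulr_ge0; [exact: ltW | exact: sqr_ge0].
    lra.
  have h2 := absorb _ (normr_ge0 (w k (Some j) - t (Some j))).
  have h3 : `|w k (Some j)| <= `|w k (Some j) - t (Some j)| + `|t (Some j)|.
    by apply: le_trans (ler_normD _ _); rewrite subrK.
  rewrite /MWj; lra.
have [MGs hMGs] := @boolp.choice _ _ (fun j M => (0 <= M) /\ forall yy, `|Gs (Some j) yy| <= M * `|yy|)
  (fun j => Gs_bound _ _ _ _ (hG (Some j)) (hadj (Some j))).
have hw o : exists MW, forall k, `|w k o| <= MW.
  case: o => [j|]. exists (MWj j) => k. exact: hwj k j.
  exists (\sum_(j < n.-1) MGs j * MWj j) => k.
  rewrite hwN normrN; apply: le_trans (ler_norm_sum _ _ _) _.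
  apply: ler_sum => j _; apply: le_trans ((hMGs j).2 _) _.
  by rewrite ler_wpM2l ?(hMGs j).1 ?hwj.
have per o : exists lo hi Mx My, [/\ 0 < lo, forall k, lo <= rho k o <= hi,
     forall k, `|x k o| <= Mx & forall k, `|y k o| <= My].
  have [MG0 [MG00 hMG]] := G_bound _ _ _ (hG o).
  have hGz k : `|G o (z k)| <= MG0 * MZ.
    by apply: le_trans (hMG _) _; rewrite ler_wpM2l ?hz.
  have [MW hMW] := hw o.
  case E: (inD o).
    have hp' k : ps_block (A o) (B o) (C o) (D o) (l o) (beta o) (m o) true
        rhohat thlo thhi dhat (G o (z k)) (w k o) (rho k o) (x k o) (y k o).
      by rewrite -E; exact: hps k o.
    exact: (bnd_D _ _ _ _ _ _ _ (hb o) _ _ _ _ _ _ _ _ _ _ _ _ _ thl0 (ltW thlh) rh0 dh0 hGz hMW hp' (hTt o)).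
  have hp' k : ps_block (A o) (B o) (C o) (D o) (l o) (beta o) (m o) false
      rhohat thlo thhi dhat (G o (z k)) (w k o) (rho k o) (x k o) (y k o).
    by rewrite -E; exact: hps k o.
  have [rlo [rhi [rl0 rlh _ h8]]] := hA8 o (negbT E).
  exact: (bnd_nD _ _ _ _ _ _ _ (hb o) _ _ _ _ _ _ _ _ _ _ _ _ _ _ _ rh0 rl0 rlh h8 hGz hMW hp' (hTt o)).
have per2 o : exists p : R * R, 0 < p.1 /\ forall k, p.1 <= rho k o <= p.2.
  by have [lo [hi [Mx [My [lo0 hr _ _]]]]] := per o; exists (lo, hi).
have [f hf] := boolp.choice per2.
have f2 o : 0 < (f o).2.
  have [p0 hp] := hf o; have /andP[h1 h2] := hp 0%N.
  by apply: lt_le_trans p0 (le_trans h1 h2).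
have Sp : 0 < \sum_o ((f o).1)^-1.
  apply: lt_le_trans (@le_sum_one _ _ (fun o => ((f o).1)^-1) None _).
    by rewrite invr_gt0; case: (hf None).
  by move=> j; rewrite invr_ge0 ltW //; case: (hf j).
split.
- move=> o; have [lo [hi [Mx [My [lo0 hr _ _]]]]] := per o; exists hi => k.
  have /andP[h1 h2] := hr k; rewrite ger0_norm //.
  by apply: le_trans (ltW lo0) h1.
- by move=> o; have [lo [hi [Mx [My [lo0 hr hx hy]]]]] := per o; exists Mx.
- exists (\sum_o ((f o).1)^-1)^-1, (\sum_o (f o).2); split; first by rewrite invr_gt0.
  move=> k o; have [p0 hp] := hf o; have /andP[h1 h2] := hp k.
  apply/andP; split.
    apply: le_trans h1; rewrite -[X in _ <= X]invrK lef_pV2 ?posrE ?invr_gt0 //.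
    apply: (@le_sum_one _ _ (fun o => ((f o).1)^-1) o).
    by move=> j; rewrite invr_ge0 ltW //; case: (hf j).
  apply: le_trans h2 _; apply: (@le_sum_one _ _ (fun o => (f o).2) o).
  by move=> j; exact: ltW.
- by move=> o; have [lo [hi [Mx [My [lo0 hr hx hy]]]]] := per o; exists My.
Qed.
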